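(* Let $S$ be an annulus, $(S,M,T)$ a triangulation, $B$ a boundary component of $S$, and $\chi_1,\chi_2$ admissible cuts of $(S,M,T)$ with $\chi_1(B)=\chi_2(B)$. Let $D=\{\triangle:\chi_{1,\triangle}(B)\ne\chi_{2,\triangle}(B)\}$. Then $\#D=2m$ for some $m\in\mathbb{N}$. Further, for each triangle $\triangle\in D$ there is a corresponding triangle $\triangle'$ with $\chi_{1,\triangle}(B)=\chi_{2,\triangle'}(B)$.
   Context: $M$ is a finite set of marked points on $\partial S$ with at least one on each boundary component; $T$ is a triangulation (maximal set of pairwise non-crossing arcs between marked points), dividing $S$ into triangles; internal triangles have no boundary segment as a side. An admissible cut $\chi$ selects one vertex (a marked point) of each internal triangle; each such choice is a local cut. $\chi(B)$ is the number of local cuts of $\chi$ whose marked point lies on $B$, and $\chi_{\triangle}(B)\in\{0,1\}$ is the number of local cuts of $\chi$ contained in the triangle $\triangle$ whose marked point lies on $B$. *)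

(* Defs.v *)
From mathcomp Require Import all_boot.
Set Implicit Arguments. Unset Strict Implicit. Unset Printing Implicit Defensive.

(* A triangulation (S,M,T), recorded combinatorially:
   - [marked]  : the finite set M of marked points;
   - [bcomp]   : the boundary components of S; [comp p] is the boundary
                 component on which the marked point p lies;
   - [edge]    : the edges of the triangulation (arcs of T and boundary
                 segments); [is_bseg e] says e is a boundary segment;
   - [tri]     : the triangles into which T divides S; each triangle has
                 three corners [corner t i] (a marked point, repetitions
                 allowed) and three sides [side t i]. *)
Record triangulation := Triangulation {
  marked : finType;
  bcomp : finType;
  comp : marked -> bcomp;
  edge : finType;
  is_bseg : pred edge;
  tri : finType;
  corner : tri -> 'I_3 -> marked;
  side : tri -> 'I_3 -> edge
}.

Definition marked_ok (T : triangulation) : Prop :=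
  forall B : bcomp T, exists p : marked T, comp p = B.

Definition annulus (T : triangulation) : Prop := #|bcomp T| = 2.

Definition internal (T : triangulation) (t : tri T) : bool :=
  [forall i : 'I_3, ~~ is_bseg (side t i)].

(* an admissible cut: a choice of a vertex (corner) of every triangle;
   only its values on internal triangles matter (the local cuts). *)
Definition cut (T : triangulation) := tri T -> 'I_3.

Definition chi_tri (T : triangulation) (chi : cut T) (t : tri T) (B : bcomp T) : nat :=
  if internal t then (comp (corner t (chi t)) == B) : nat else 0.

Definition chiB (T : triangulation) (chi : cut T) (B : bcomp T) : nat :=
  \sum_(t : tri T | internal t) chi_tri chi t B.

(* Main.v *)
Require Import Defs.
From mathcomp Require Import all_boot zify.

Lemma chi_tri_le1 (T : triangulation) (chi : cut T) t B : chi_tri chi t B <= 1.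
Proof. by rewrite /chi_tri; case: internal => //; case: eqP. Qed.

Lemma chiB_all (T : triangulation) (chi : cut T) B :
  chiB chi B = \sum_(t : tri T) chi_tri chi t B.
Proof.
rewrite /chiB [RHS](bigID (fun t => internal t)) /= [X in _ = _ + X]big1 ?addn0 //.
by move=> t /negbTE Ht; rewrite /chi_tri Ht.
Qed.

Lemma sum_pos_ex (T : finType) (D : {set T}) (h : T -> nat) :
  0 < \sum_(t in D) h t -> exists2 t, t \in D & h t != 0.
Proof.
move=> H.
have [/existsP [t /andP [Ht Hh]]|/existsPn Hn] := boolP [exists t, (t \in D) && (h t != 0)].
  by exists t.
move: H; rewrite big1 // => t Ht.
by move: (Hn t); rewrite Ht /= negbK => /eqP.
Qed.

Theorem lemma6p11 (T : triangulation) (hM : marked_ok T) (hA : annulus T)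
  (B : bcomp T) (chi1 chi2 : cut T)
  (hB : chiB chi1 B = chiB chi2 B) :
  let D := [set t : tri T | chi_tri chi1 t B != chi_tri chi2 t B] in
  (exists m : nat, #|D| = 2 * m) /\
  (forall t, t \in D -> exists2 t', t' \in D & chi_tri chi1 t B = chi_tri chi2 t' B).
Proof.
move=> D.
set f := fun t => chi_tri chi1 t B; set g := fun t => chi_tri chi2 t B.
have Hf t : f t <= 1 by apply: chi_tri_le1.
have Hg t : g t <= 1 by apply: chi_tri_le1.
have HD t : t \in D -> f t + g t = 1.
  rewrite inE; move: (Hf t) (Hg t); rewrite /f /g.
  by case: (chi_tri chi1 t B) => [|[|]] //; case: (chi_tri chi2 t B) => [|[|]].
have HnD t : t \notin D -> f t = g t by rewrite inE negbK => /eqP.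
have Heq : \sum_(t in D) f t = \sum_(t in D) g t.
  move: hB; rewrite !chiB_all (bigID (fun t => t \in D)) /=.
  rewrite [X in _ = X](bigID (fun t => t \in D)) /=.
  rewrite [X in _ + X = _ -> _](eq_bigr g); last by move=> t; apply: HnD.
  by move/eqP; rewrite eqn_add2r => /eqP.
have Hsum : \sum_(t in D) f t + \sum_(t in D) g t = #|D|.
  by rewrite -big_split /= -sum1_card; apply: eq_bigr => t; apply: HD.
split.
  exists (\sum_(t in D) f t); rewrite -Hsum -Heq; lia.
move=> t tD.
have := HD t tD; rewrite /f /g.
case Ef: (chi_tri chi1 t B) => [|n] /=.
- move=> Eg.
  have : 0 < \sum_(t in D) f t.
    rewrite Heq (bigD1 t) //= /g; move: Eg; rewrite add0n => ->; lia.
  case/sum_pos_ex => t' t'D Hft'.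
  exists t' => //; have := HD t' t'D; rewrite /f /g in Hft' *; lia.
- move=> Eg.
  have : 0 < \sum_(t in D) g t.
    rewrite -Heq (bigD1 t) //= /f Ef; lia.
  case/sum_pos_ex => t' t'D Hgt'.
  exists t' => //; have := HD t' t'D; rewrite /f /g in Hgt' *; lia.
Qed.
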